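(* For every finite connected chordal graph $G$, the set $C^1(G)=\{v: e(v)\le\operatorname{rad}(G)+1\}$ is a tight upper certificate of $G$, i.e. $e(u)=\min_{x\in C^1(G)}(d(u,x)+e(x))$ for every vertex $u$.
   Context: A graph is chordal if every induced cycle of length at least 4 has a chord. $d$ shortest-path distance, $e(v)=\max_u d(v,u)$, $\operatorname{rad}(G)=\min_v e(v)$. *)

(* Defs.v *)
From mathcomp Require Import all_boot.
Set Implicit Arguments. Unset Strict Implicit. Unset Printing Implicit Defensive.

(* A finite simple graph: vertex set T : finType, adjacency e : rel T,
   assumed symmetric and irreflexive in the theorem. *)

Section Graph.
Variables (T : finType) (e : rel T).

Fixpoint ball (x : T) (k : nat) : {set T} :=
  if k is k'.+1 then ball x k' :|: [set y | [exists z in ball x k', e z y]]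
  else [set x].

(* shortest-path distance: least k (< #|T|) with y in ball x k
   (meaningful for connected graphs, where it always exists) *)
Definition dist (x y : T) : nat := find (fun k => y \in ball x k) (iota 0 #|T|).

Definition ecc (v : T) : nat := \max_(u : T) dist v u.

(* radius: min of eccentricities (#|T| is an upper bound for every ecc) *)
Definition rad : nat := \big[minn/#|T|]_(v : T) ecc v.

Definition connected_graph : Prop := forall x y : T, connect e x y.

(* chordal: every cycle of length >= 4 (distinct vertices) has a chord,
   i.e. an edge between two vertices that are not consecutive on the cycle.
   (Equivalent to: every induced cycle has length 3.) *)
Definition chordal : Prop :=
  forall s : seq T, uniq s -> 4 <= size s -> cycle e s ->
    exists x y, [&& x \in s, y \in s, x != y,
      y != next s x, x != next s y & e x y].

Definition C1 : {set T} := [set v | ecc v <= rad + 1].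

End Graph.

(* Main.v *)
Require Import Defs.
From mathcomp Require Import all_boot.
From mathcomp Require Import zify.
From Stdlib Require Import Classical.

Set Implicit Arguments. Unset Strict Implicit. Unset Printing Implicit Defensive.

Section Walks.
Variables (T : finType) (e : rel T).
Hypothesis esym : symmetric e.
Hypothesis eirr : irreflexive e.
Hypothesis conn : connected_graph e.

Definition is_walk (f : nat -> T) (n : nat) := forall j, j < n -> e (f j) (f j.+1).
Definition W x y n := exists f, [/\ f 0 = x, f n = y & is_walk f n].

Lemma W0 x : W x x 0.
Proof. by exists (fun _ => x); split => // j; rewrite ltn0. Qed.

Lemma W_edge x y : e x y -> W x y 1.
Proof.
move=> exy; exists (fun j => if j is 0 then x else y); split => // [[|j]] //.
Qed.

Lemma W_rev x y n : W x y n -> W y x n.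
Proof.
case=> f [f0 fn wf]; exists (fun j => f (n - j)); split.
- by rewrite subn0.
- by rewrite subnn.
- move=> j jn; rewrite esym.
  have -> : n - j = (n - j.+1).+1 by lia.
  apply: wf; lia.
Qed.

Lemma W_cat x y z n m : W x y n -> W y z m -> W x z (n + m).
Proof.
case=> f [f0 fn wf] [g [g0 gm wg]].
exists (fun j => if j <= n then f j else g (j - n)); split.
- by rewrite leq0n.
- case: ifP => h.
    have m0 : m = 0 by lia.
    by subst m; rewrite addn0 fn -g0 gm.
  by rewrite addKn.
- move=> j jlt /=; case: ifP => h1; case: ifP => h2.
  + apply: wf; lia.
  + have jn : j = n by lia.
    subst j; rewrite subSnn fn -g0; apply: wg; lia.
  + lia.
  + have -> : j.+1 - n = (j - n).+1 by lia.
    apply: wg; lia.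
Qed.

Lemma W_step x y n : W x y n.+1 -> exists2 z, e x z & W z y n.
Proof.
case=> f [f0 fn wf]; exists (f 1).
  by rewrite -f0; apply: wf.
exists (fun j => f j.+1); split => // j jn; apply: wf; lia.
Qed.

Lemma W_stepr x y n : W x y n.+1 -> exists2 z, W x z n & e z y.
Proof.
move/W_rev/W_step => [z eyz /W_rev wz]; exists z => //; by rewrite esym.
Qed.

Lemma W_0 x y : W x y 0 -> x = y.
Proof. by case=> f [<- <-]. Qed.

Lemma W_1 x y : W x y 1 -> e x y.
Proof. by case=> f [<- <- wf]; apply: wf. Qed.

Lemma ballP x y k : y \in ball e x k <-> exists2 n, n <= k & W x y n.
Proof.
split.
  elim: k y => [|k IH] y /=.
    by rewrite inE => /eqP ->; exists 0 => //; apply: W0.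
  rewrite inE => /orP [/IH [n nk wn]| ].
    by exists n => //; lia.
  rewrite inE => /existsP [z /andP [zin ezy]].
  case: (IH z zin) => n nk wn; exists (n + 1); first lia.
  by apply: W_cat wn (W_edge ezy).
elim: k y => [|k IH] y [n nk wn] /=.
  have n0 : n = 0 by lia.
  by subst n; rewrite inE (W_0 wn).
rewrite inE; case: (ltnP n k.+1) => h.
  by rewrite IH //; exists n.
have nk1 : n = k.+1 by lia.
subst n; case: (W_stepr wn) => z wz ezy.
apply/orP; right; rewrite inE; apply/existsP; exists z.
by rewrite ezy andbT IH //; exists k.
Qed.

Lemma card_pos (x : T) : 0 < #|T|.
Proof. by apply/card_gt0P; exists x. Qed.

Lemma ball_all x y : y \in ball e x #|T|.-1.
Proof.
move/connectP: (conn x y) => [p pth ->].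
case: (shortenP pth) => p' pth' uq _.
apply/ballP; exists (size p').
  move/card_uniqP: (uq) => h.
  have := max_card (mem (x :: p')); rewrite h /=; lia.
exists (fun j => nth x (x :: p') j); split => //.
  by rewrite -[size p']/((size (x :: p')).-1) nth_last.
move=> j jlt; move/(pathP x): pth' => /(_ j jlt) //.
Qed.

Lemma dist_ball x y : y \in ball e x (dist e x y).
Proof.
have N0 := card_pos x.
have hs : has (fun k => y \in ball e x k) (iota 0 #|T|).
  apply/hasP; exists #|T|.-1; last exact: ball_all.
  rewrite mem_iota; lia.
have hlt := hs; rewrite has_find size_iota in hlt.
by have := nth_find 0 hs; rewrite /dist nth_iota.
Qed.

Lemma dist_ltN x y : dist e x y < #|T|.
Proof.
have N0 := card_pos x.
have hs : has (fun k => y \in ball e x k) (iota 0 #|T|).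
  apply/hasP; exists #|T|.-1; last exact: ball_all.
  rewrite mem_iota; lia.
by move: hs; rewrite has_find size_iota.
Qed.

Lemma dist_min x y k : y \in ball e x k -> dist e x y <= k.
Proof.
move=> yk; rewrite leqNgt; apply/negP => lt.
have := before_find 0 lt; rewrite nth_iota ?yk //.
have := dist_ltN x y; lia.
Qed.

Lemma distP x y k : dist e x y <= k <-> exists2 n, n <= k & W x y n.
Proof.
split.
  move=> h; case/ballP: (dist_ball x y) => n nk wn; exists n => //; lia.
by move/ballP/dist_min.
Qed.

Lemma dist_W x y : W x y (dist e x y).
Proof.
case/ballP: (dist_ball x y) => n nk wn.
have : dist e x y <= n by apply/distP; exists n.
move=> h; have -> : dist e x y = n by lia.
exact wn.
Qed.

Lemma dist_leW x y n : W x y n -> dist e x y <= n.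
Proof. by move=> wn; apply/distP; exists n. Qed.

Lemma dist_sym x y : dist e x y = dist e y x.
Proof.
apply/eqP; rewrite eqn_leq; apply/andP; split; apply: dist_leW; apply: W_rev; apply: dist_W.
Qed.

Lemma dist_tri x y z : dist e x z <= dist e x y + dist e y z.
Proof. apply: dist_leW; apply: W_cat; apply: dist_W. Qed.

Lemma dist_xx x : dist e x x = 0.
Proof. apply/eqP; rewrite -leqn0; apply: dist_leW; exact: W0. Qed.

Lemma dist_eq0 x y : dist e x y = 0 -> x = y.
Proof. move=> h; have := dist_W x y; rewrite h; exact: W_0. Qed.

Lemma dist_edge x y : e x y -> dist e x y <= 1.
Proof. by move/W_edge/dist_leW. Qed.

Lemma dist_1 x y : dist e x y = 1 -> e x y.
Proof. move=> h; have := dist_W x y; rewrite h; exact: W_1. Qed.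

Lemma dist_le1 x y : dist e x y <= 1 -> x = y \/ e x y.
Proof.
move=> h; case: (ltnP (dist e x y) 1) => h2.
  by left; apply: dist_eq0; lia.
by right; apply: dist_1; lia.
Qed.

Lemma dist_step x y n : dist e x y = n.+1 -> exists2 z, e x z & dist e z y = n.
Proof.
move=> h; have := dist_W x y; rewrite h => /W_step [z exz wz].
exists z => //; apply/eqP; rewrite eqn_leq (dist_leW wz) /=.
have := dist_tri x z y; have := dist_edge exz; lia.
Qed.

Lemma dist_lip a b z : e a b -> dist e a z <= (dist e b z).+1.
Proof. move=> eab; have := dist_tri a b z; have := dist_edge eab; lia. Qed.



Lemma minP (Q : nat -> Prop) n : Q n -> exists m, Q m /\ forall k, Q k -> m <= k.
Proof.
elim: n {-2}n (leqnn n) => [|N IH] n nN Qn.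
  exists n; split => // k _; lia.
case: (classic (exists k, k < n /\ Q k)) => [[k [kn Qk]]|h].
  apply: (IH k) => //; lia.
exists n; split => // k Qk; rewrite leqNgt; apply/negP => kn; apply: h; by exists k.
Qed.

Hypothesis ch : chordal e.

Lemma chordal_fun (f : nat -> T) m :
  4 <= m -> (forall j j', j < j' -> j' < m -> f j != f j') ->
  (forall j, j.+1 < m -> e (f j) (f j.+1)) -> e (f m.-1) (f 0) ->
  (forall j j', j < j' -> j' < m -> e (f j) (f j') -> j' = j.+1 \/ (j = 0 /\ j' = m.-1)) ->
  False.
Proof.
move=> m4 finj fe fc fch.
set s := f 0 :: [seq f j | j <- iota 1 m.-1].
have ss : size s = m by rewrite /= size_map size_iota; lia.
have nths j : j < m -> nth (f 0) s j = f j.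
  case: j => [|j] //= jm; rewrite (nth_map 0) ?size_iota ?nth_iota //; lia.
have ins j : j < m -> f j \in s.
  by move=> jm; rewrite -nths // mem_nth // ss.
have uq : uniq s.
  apply/(uniqP (f 0)) => j j'; rewrite !inE ss => jm j'm; rewrite !nths //.
  move=> fj; case: (ltngtP j j') => // h.
    by have := finj j j' h j'm; rewrite fj eqxx.
  by have := finj j' j h jm; rewrite fj eqxx.
have nxt j : j < m -> next s (f j) = f (if j.+1 < m then j.+1 else 0).
  move=> jm; have ij : index (f j) s = j by rewrite -{1}(nths j jm) index_uniq // ss.
  rewrite next_nth ins // ij /s /=.
  case: ifP => h.
    rewrite (nth_map 0) ?size_iota ?nth_iota //; lia.
  rewrite nth_default // size_map size_iota; lia.
have cy : cycle e s.
  rewrite (cycle_path (f 0)); apply/(pathP (f 0)) => k; rewrite ss => km.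
  case: k km => [|k] km.
    have hl : last (f 0) s = f m.-1 by rewrite -nth_last ss nths //; lia.
    by change (e (last (f 0) s) (f 0)); rewrite hl.
  have -> : nth (f 0) (last (f 0) s :: s) k.+1 = nth (f 0) s k by [].
  rewrite !nths //; [apply: fe => // | lia].
have h4 : 4 <= size s by rewrite ss.
have [x [y /and5P [xs ys xy ynx /andP [xny exy]]]] := ch uq h4 cy.
have getj z : z \in s -> exists2 j, j < m & z = f j.
  move=> /(nthP (f 0)) [j]; rewrite ss => jm <-; exists j => //; exact: nths.
case: (getj x xs) => j jm xj; case: (getj y ys) => j' j'm yj; subst x y.
case: (ltngtP j j') => h.
- case: (fch j j' h j'm exy) => [hj'|[hj hj']].
    by move: ynx; rewrite nxt // ifT; [rewrite hj' eqxx | lia].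
  by move: xny; rewrite nxt // ifF; [rewrite hj eqxx | lia].
- rewrite esym in exy; case: (fch j' j h jm exy) => [hj'|[hj hj']].
    by move: xny; rewrite nxt // ifT; [rewrite hj' eqxx | lia].
  by move: ynx; rewrite nxt // ifF; [rewrite hj eqxx | lia].
- by move: xy; rewrite h eqxx.
Qed.



Definition CW (P : pred T) x y n :=
  exists f, [/\ f 0 = x, f n = y, is_walk f n & forall j, 0 < j < n -> P (f j)].

Lemma CW_edge P x y : e x y -> CW P x y 1.
Proof.
move=> exy; exists (fun j => if j is 0 then x else y); split => //.
- by case.
- move=> j; lia.
Qed.

Lemma CW_W P x y n : CW P x y n -> W x y n.
Proof. by case=> f [*]; exists f. Qed.

Lemma CW_rev P x y n : CW P x y n -> CW P y x n.
Proof.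
case=> f [f0 fn wf pf]; exists (fun j => f (n - j)); split.
- by rewrite subn0.
- by rewrite subnn.
- move=> j jn; rewrite esym.
  have -> : n - j = (n - j.+1).+1 by lia.
  apply: wf; lia.
- move=> j jn; apply: pf; lia.
Qed.

Lemma CW_cat P x y z n m : CW P x y n -> CW P y z m -> P y -> CW P x z (n + m).
Proof.
case=> f [f0 fn wf pf] [g [g0 gm wg pg]] Py.
exists (fun j => if j <= n then f j else g (j - n)); split.
- by rewrite leq0n.
- case: ifP => h.
    have m0 : m = 0 by lia.
    by subst m; rewrite addn0 fn -g0 gm.
  by rewrite addKn.
- move=> j jlt /=; case: ifP => h1; case: ifP => h2.
  + apply: wf; lia.
  + have jn : j = n by lia.
    subst j; rewrite subSnn fn -g0; apply: wg; lia.
  + lia.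
  + have -> : j.+1 - n = (j - n).+1 by lia.
    apply: wg; lia.
- move=> j jlt /=; case: ifP => h1.
    case: (ltnP j n) => h2; first by apply: pf; lia.
    have jn : j = n by lia.
    by subst j; rewrite fn.
  apply: pg; lia.
Qed.

Lemma minCW (P : pred T) x y n f : f 0 = x -> f n = y -> is_walk f n ->
  (forall j, 0 < j < n -> P (f j)) -> (forall k, CW P x y k -> n <= k) ->
  (forall j j', j < j' -> j' <= n -> f j != f j') /\
  (forall j j', j.+1 < j' -> j' <= n -> ~~ e (f j) (f j')).
Proof.
move=> f0 fn wf pf mn; split.
  move=> j j' jj' j'n; apply/negP => /eqP fj.
  have : CW P x y (n - (j' - j)).
    exists (fun l => if l <= j then f l else f (l + (j' - j))); split.
    - by rewrite leq0n.
    - case: ifP => h.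
        have -> : n - (j' - j) = j by lia.
        have jn : j' = n by lia.
        by rewrite fj jn.
      have -> : n - (j' - j) + (j' - j) = n by lia.
      exact fn.
    - move=> l ll /=; case: ifP => h1; case: ifP => h2.
      + apply: wf; lia.
      + have lj : l = j by lia.
        subst l; rewrite fj.
        have -> : j.+1 + (j' - j) = j'.+1 by lia.
        apply: wf; lia.
      + lia.
      + have -> : l.+1 + (j' - j) = (l + (j' - j)).+1 by lia.
        apply: wf; lia.
    - move=> l ll /=; case: ifP => h1; apply: pf; lia.
  move/mn; lia.
move=> j j' jj' j'n; apply/negP => ejj.
have : CW P x y (n - (j' - j).-1).
  exists (fun l => if l <= j then f l else f (l + (j' - j).-1)); split.
  - by rewrite leq0n.
  - case: ifP => h; first lia.
    have -> : n - (j' - j).-1 + (j' - j).-1 = n by lia.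
    exact fn.
  - move=> l ll /=; case: ifP => h1; case: ifP => h2.
    + apply: wf; lia.
    + have lj : l = j by lia.
      subst l.
      have -> : j.+1 + (j' - j).-1 = j' by lia.
      exact ejj.
    + lia.
    + have -> : l.+1 + (j' - j).-1 = (l + (j' - j).-1).+1 by lia.
      apply: wf; lia.
  - move=> l ll /=; case: ifP => h1; apply: pf; lia.
move/mn; lia.
Qed.



Section Root.
Variable r : T.
Local Notation lv := (dist e r).

Lemma lvl_edge a b : e a b -> lv b <= (lv a).+1.
Proof. move=> eab; have := dist_tri r a b; have := dist_edge eab; lia. Qed.

Lemma lvl_edge2 a b : e a b -> lv a <= (lv b).+1.
Proof. by rewrite esym; apply: lvl_edge. Qed.

Lemma desc z : exists g, [/\ g 0 = z, g (lv z) = r, is_walk g (lv z) &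
  forall j, j <= lv z -> lv (g j) = lv z - j].
Proof.
move: {-1}(lv z) (erefl (lv z)) => n; elim: n z => [|n IH] z hz.
  have rz := dist_eq0 hz; subst z.
  exists (fun _ => r); split => // j; rewrite ?ltn0 // => _; rewrite hz.
rewrite dist_sym in hz; case: (dist_step hz) => z' ezz' hz'.
rewrite dist_sym in hz'; case: (IH z' hz') => g [g0 gn wg lg].
exists (fun j => if j is k.+1 then g k else z); split => //.
- move=> [|j] jn /=; first by rewrite g0.
  apply: wg; lia.
- move=> [|j] jn /=; first by rewrite dist_sym hz subn0.
  rewrite lg; lia.
Qed.

Lemma descCW z t : lv z <= t.+1 -> CW (fun w => lv w <= t) z r (lv z).
Proof.
move=> zt; case: (desc z) => g [g0 gn wg lg]; exists g; split => // j jn.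
rewrite lg; lia.
Qed.

Definition up i s s' := [/\ i <= lv s, i <= lv s' & exists n, CW (fun z => i <= lv z) s s' n].

Lemma up_refl i s : i <= lv s -> up i s s.
Proof.
move=> h; split => //; exists 0; exists (fun _ => s); split => // j; lia.
Qed.

Lemma up_ext i s s' s'' : up i s s' -> e s' s'' -> i <= lv s'' -> up i s s''.
Proof.
case=> h1 h2 [n cw] es hs; split => //; exists (n + 1).
by apply: CW_cat cw (CW_edge _ es) h2.
Qed.

Lemma CNC i x y s s' : 0 < i -> lv x = i.-1 -> lv y = i.-1 -> e x s -> e s' y ->
  up i s s' -> x = y \/ e x y.
Proof.
move=> i0 lx ly exs esy [ls ls' [n cw]].
case: (eqVneq x y) => [-> | xy]; first by left.
case exy: (e x y); first by right.
exfalso.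
have i2 : 1 < i.
  case: (ltnP 1 i) => // i1.
  have x0 : lv x = 0 by lia.
  have y0 : lv y = 0 by lia.
  by move: xy; rewrite -(dist_eq0 x0) -(dist_eq0 y0) eqxx.
set Pu := fun z => i <= lv z.
have cwu : CW Pu x y (1 + (n + 1)).
  apply: CW_cat (CW_edge _ exs) (CW_cat cw (CW_edge _ esy) ls') ls.
case: (minP cwu) => nU [[fU [fU0 fUn wU pU]] mU].
have [injU chU] := minCW fU0 fUn wU pU mU.
set Pl := fun z => lv z <= i - 2.
have cwl : CW Pl y x (lv y + lv x).
  apply: CW_cat (descCW _) (CW_rev (descCW _)) _; rewrite /Pl ?dist_xx; lia.
case: (minP cwl) => nD [[fD [fD0 fDn wD pD]] mD].
have [injD chD] := minCW fD0 fDn wD pD mD.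
have nU2 : 1 < nU.
  case: (ltnP 1 nU) => // h.
  case: nU fUn wU h {pU mU injU chU} => [|[|k]] fUn wU h //.
    by move: xy; rewrite -fU0 -fUn eqxx.
  by move: exy; rewrite -fU0 -fUn wU.
have nD2 : 1 < nD.
  case: (ltnP 1 nD) => // h.
  case: nD fDn wD h {pD mD injD chD} => [|[|k]] fDn wD h //.
    by move: xy; rewrite -fD0 -fDn eqxx.
  by move: exy; rewrite -fD0 -fDn esym wD.
apply: (@chordal_fun (fun l => if l < nU then fU l else fD (l - nU)) (nU + nD)).
- lia.
- move=> j j' jj' j'm /=; case: ifP => h1; case: ifP => h2.
  + apply: injU; lia.
  + case: (posnP j) => j0.
      subst j; rewrite fU0 -fDn eq_sym; apply: injD; lia.
    case: (posnP (j' - nU)) => l0.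
      rewrite l0 fD0 -fUn; apply: injU; lia.
    apply/negP => /eqP hh.
    have := pU j; have := pD (j' - nU); rewrite /Pu /Pl hh; lia.
  + lia.
  + have := injD (j - nU) (j' - nU); apply; lia.
- move=> j jm /=; case: ifP => h1; case: ifP => h2.
  + apply: wU; lia.
  + have jn : j.+1 = nU by lia.
    rewrite -jn subnn fD0 -fUn -jn; apply: wU; lia.
  + lia.
  + have -> : j.+1 - nU = (j - nU).+1 by lia.
    apply: wD; lia.
- rewrite /= ifF; last lia.
  rewrite ifT; last lia.
  have -> : (nU + nD).-1 - nU = nD.-1 by lia.
  rewrite fU0 -fDn; have := wD nD.-1; rewrite prednK; last lia.
  by apply; lia.
- move=> j j' jj' j'm /=; case: ifP => h1; case: ifP => h2 hj.
  + case: (eqVneq j' j.+1) => [->|ne]; first by left.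
    by move: hj; rewrite (negbTE (chU j j' _ _)) //; lia.
  + case: (posnP j) => j0.
      subst j; case: (eqVneq (j' - nU) nD.-1) => hl.
        right; split => //; lia.
      move: hj; rewrite fU0 -fDn esym (negbTE (chD (j' - nU) nD _ _)) //; lia.
    case: (posnP (j' - nU)) => l0.
      move: hj; rewrite l0 fD0 -fUn.
      case: (eqVneq nU j.+1) => [hh|ne]; first by left; lia.
      rewrite (negbTE (chU j nU _ _)) //; lia.
    have := pU j; have := pD (j' - nU); have := lvl_edge2 hj; rewrite /Pu /Pl; lia.
  + lia.
  + case: (eqVneq j' j.+1) => [->|ne]; first by left.
    by move: hj; rewrite (negbTE (chD (j - nU) (j' - nU) _ _)) //; lia.
Qed.


Lemma dist_le1' x y : x = y \/ e x y -> dist e x y <= 1.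
Proof. by case=> [->|/dist_edge //]; rewrite dist_xx. Qed.

Lemma alpha1 a b x : e a b -> lv b = (lv a).+1 -> dist e a x = (dist e b x).+1 ->
  lv a + dist e b x <= lv x.
Proof.
move=> eab lab hx.
set i := lv b.
have i0 : 0 < i by rewrite /i lab.
have la : lv a = i.-1 by rewrite /i lab.
have step1 : forall m z, dist e b z = m -> dist e a z = m.+1 -> up i b z.
  elim=> [|m IH] z hb ha.
    by rewrite -(dist_eq0 hb); apply: up_refl.
  rewrite dist_sym in hb; case: (dist_step hb) => z' ezz' hz'.
  rewrite dist_sym in hz'.
  have ha' : dist e a z' = m.+1.
    have := dist_tri a b z'; have := dist_edge eab.
    have := dist_tri a z' z; have := dist_edge (_ : e z' z).
    rewrite esym; move=> /(_ ezz'); lia.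
  have u := IH z' hz' ha'.
  have lz : i <= lv z.
    case: (leqP i (lv z)) => // hlt.
    have := lvl_edge ezz'; case: (u) => _ hi _ => h2.
    have lz : lv z = i.-1 by lia.
    have := CNC i0 la lz eab (_ : e z' z) u; rewrite esym => /(_ ezz') /dist_le1'.
    lia.
  by apply: up_ext u _ lz; rewrite esym.
have step2 : forall n z, lv z = i + n -> up i b z -> dist e a z <= n + 2.
  elim=> [|n IH] z hz u.
    have : dist e z r = (i.-1).+1 by rewrite dist_sym hz; lia.
    case/dist_step => z'' ezz hz''; rewrite dist_sym in hz''.
    have := CNC i0 la hz'' eab ezz u => /dist_le1' h.
    have := dist_tri a z'' z; have := dist_edge (_ : e z'' z).
    rewrite esym => /(_ ezz); lia.
  have : dist e z r = (i + n).+1 by rewrite dist_sym hz; lia.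
  case/dist_step => z'' ezz hz''; rewrite dist_sym in hz''.
  have u' : up i b z'' by apply: up_ext u ezz _; lia.
  have := IH z'' hz'' u'.
  have := dist_tri a z'' z; have := dist_edge (_ : e z'' z).
  rewrite esym => /(_ ezz); lia.
have u := step1 _ x (erefl _) hx.
have lx : i <= lv x by case: u.
have := step2 (lv x - i) x (_ : lv x = i + (lv x - i)) u.
rewrite hx => h; have : lv x = i + (lv x - i) by lia.
move=> /h; lia.
Qed.

Lemma T1 a b n : e a b -> lv a = n.+1 -> lv b = n.+1 ->
  exists t, [/\ e t a, e t b & lv t = n].
Proof.
move=> eab la lb.
have : dist e a r = n.+1 by rewrite dist_sym.
case/dist_step => a' eaa' ha'; rewrite dist_sym in ha'.
have : dist e b r = n.+1 by rewrite dist_sym.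
case/dist_step => b' ebb' hb'; rewrite dist_sym in hb'.
have u : up n.+1 a b by apply: up_ext (up_refl _) eab _; lia.
have ea'a : e a' a by rewrite esym.
case: (@CNC n.+1 a' b' a b (ltn0Sn _) ha' hb' ea'a ebb' u) => [hab|eab'].
  by subst b'; exists a'; split => //; rewrite esym.
case eab2: (e a b').
  by exists b'; split => //; rewrite esym.
case eba2: (e b a').
  by exists a'; split => //; rewrite esym.
exfalso.
have neq u1 u2 : lv u1 != lv u2 -> u1 != u2.
  by apply: contra => /eqP ->.
have eneq u1 u2 : e u1 u2 -> u1 != u2.
  by move=> h; apply/negP => /eqP hh; move: h; rewrite hh eirr.
apply: (@chordal_fun (fun j => nth a [:: a; b; b'; a'] j) 4) => //.
- move=> [|[|[|[|j]]]] [|[|[|[|j']]]] //= _ _.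
  + exact: eneq.
  + by apply: neq; rewrite la hb'; lia.
  + by apply: neq; rewrite la ha'; lia.
  + by apply: neq; rewrite lb hb'; lia.
  + by apply: neq; rewrite lb ha'; lia.
  + by rewrite eq_sym; apply: eneq.
- move=> [|[|[|j]]] //= _; by rewrite esym.
- move=> [|[|[|[|j]]]] [|[|[|[|j']]]] //= _ _; rewrite ?eab2 ?eba2 //; by auto.
Qed.

End Root.


Lemma dist_ecc v u : dist e v u <= ecc e v.
Proof. rewrite /ecc; apply: (@leq_bigmax T (fun u => dist e v u) u). Qed.

Lemma ecc_le v k : (forall u, dist e v u <= k) -> ecc e v <= k.
Proof. by move=> h; apply/bigmax_leqP => u _; apply: h. Qed.

Lemma ecc_tri u x : ecc e u <= dist e u x + ecc e x.
Proof.
apply: ecc_le => z; have := dist_tri u x z; have := dist_ecc x z; lia.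
Qed.

Lemma NL v y : (ecc e y).+2 <= ecc e v -> exists2 w, e v w & ecc e w < ecc e v.
Proof.
move=> hk; set k := ecc e v in hk *.
set p := dist e v y.
have hp : 2 <= p by have := ecc_tri v y; rewrite -/p -/k; lia.
have hyz z : dist e y z <= (ecc e y) by apply: dist_ecc.
have lvv : dist e y v = p by rewrite dist_sym.
have : dist e v y = (p.-1).+1 by rewrite -/p; lia.
case/dist_step => w0 evw0 hw0; rewrite dist_sym in hw0.
set K := fun w => e v w && (dist e y w == p.-1).
have Kw0 : K w0 by rewrite /K evw0 hw0 eqxx.
have hA : forall w z, K w -> dist e w z <= dist e v z \/ dist e w z <= k - 2.
  move=> w z /andP [evw /eqP lw].
  have := dist_lip z (_ : e w v); rewrite esym => /(_ evw) hl.
  case: (leqP (dist e w z) (dist e v z)) => h; first by left.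
  right; have hwz : dist e w z = (dist e v z).+1 by lia.
  have ewv : e w v by rewrite esym.
  have hlv : dist e y v = (dist e y w).+1 by rewrite lw lvv; lia.
  have := alpha1 ewv hlv hwz; have := hyz z; rewrite lw; lia.
have hlo : forall w z, K w -> (dist e v z) <= (dist e w z).+1.
  move=> w z /andP [evw _]; exact: dist_lip.
have hB : forall z, dist e v z = k -> exists2 w, K w & dist e w z = k.-1.
  move=> z hz.
  case: (eqVneq (dist e w0 z) k.-1) => h0; first by exists w0.
  have hw0z : dist e w0 z = k.
    have := hA w0 z Kw0; have := hlo w0 z Kw0; lia.
  have := @T1 z v w0 k.-1 evw0; rewrite dist_sym hz dist_sym hw0z.
  have -> : k.-1.+1 = k by lia.
  move=> /(_ erefl erefl) [t [etv etw0 ht]].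
  exists t; last by rewrite dist_sym.
  have evt : e v t by rewrite esym.
  have ew0t : e w0 t by rewrite esym.
  rewrite /K evt /=.
  have d1 : dist e y t <= (dist e y w0).+1.
    have := dist_tri y w0 t; have := dist_edge ew0t; lia.
  have d2 : dist e y v <= (dist e y t).+1.
    have := dist_tri y t v; have := dist_edge etv; lia.
  apply/eqP; case: (eqVneq (dist e y t) p.-1) => // hne.
  have hyt : dist e y t = (dist e y w0).+1 by rewrite hw0; lia.
  have htz : dist e t z = k.-1 by rewrite dist_sym.
  have hw0t : dist e w0 z = (dist e t z).+1 by rewrite htz hw0z; lia.
  have := alpha1 ew0t hyt hw0t; have := hyz z; rewrite hw0 htz; lia.
have hC : forall w1 w2 z1 z2, K w1 -> K w2 -> dist e v z1 = k -> dist e v z2 = k ->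
    dist e w1 z1 = k.-1 -> dist e w2 z2 = k.-1 ->
    dist e w1 z2 = k.-1 \/ dist e w2 z1 = k.-1.
  move=> w1 w2 z1 z2 K1 K2 h1 h2 d1 d2.
  case: (eqVneq (dist e w1 z2) k.-1) => n1; first by left.
  case: (eqVneq (dist e w2 z1) k.-1) => n2; first by right.
  exfalso.
  have e1 : dist e w1 z2 = k by have := hA w1 z2 K1; have := hlo w1 z2 K1; lia.
  have e2 : dist e w2 z1 = k by have := hA w2 z1 K2; have := hlo w2 z1 K2; lia.
  move: (K1) (K2) => /andP [ev1 /eqP l1] /andP [ev2 /eqP l2].
  have u : up y p v v by apply: up_refl; rewrite lvv.
  have p0 : 0 < p by lia.
  have ew1v : e w1 v by rewrite esym.
  case: (CNC p0 l1 l2 ew1v ev2 u) => [w12|ew12].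
    by subst w2; move: e2; rewrite d1; lia.
  have ew21 : e w2 w1 by rewrite esym.
  have hl : dist e z2 w1 = (dist e z2 w2).+1 by rewrite dist_sym e1 dist_sym d2; lia.
  have hx : dist e w2 z1 = (dist e w1 z1).+1 by rewrite e2 d1; lia.
  have := alpha1 ew21 hl hx; rewrite dist_sym d2 d1.
  have := dist_tri z2 y z1; have := hyz z1; have := hyz z2; rewrite (dist_sym z2 y).
  lia.
have hD : forall s : seq T, (forall z, z \in s -> dist e v z = k) ->
    exists2 w, K w & forall z, z \in s -> dist e w z = k.-1.
  elim=> [|a s IH] hs; first by exists w0.
  case: IH => [b bs|w Kw hw]; first by apply: hs; rewrite inE bs orbT.
  have ha : dist e v a = k by apply: hs; rewrite inE eqxx.
  case: (hB a ha) => w' Kw' hw'.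
  case: (eqVneq (dist e w a) k.-1) => hwa.
    by exists w => // b; rewrite inE => /orP [/eqP ->|]; [|apply: hw].
  exists w' => // b; rewrite inE => /orP [/eqP ->|bs] //.
  have hb : dist e v b = k by apply: hs; rewrite inE bs orbT.
  case: (hC w w' b a Kw Kw' hb ha (hw b bs) hw') => //.
  by move: hwa => /eqP.
case: (hD [seq z <- enum T | dist e v z == k]) => [z|w Kw hw].
  by rewrite mem_filter => /andP [/eqP].
exists w; first by case/andP: Kw.
have : ecc e w <= k.-1.
  apply: ecc_le => z.
  case: (eqVneq (dist e v z) k) => hz.
    by rewrite hw // mem_filter mem_enum hz eqxx.
  have := dist_ecc v z; rewrite -/k => hz2.
  have := hA w z Kw; lia.
lia.
Qed.

Lemma rad_att (u0 : T) : exists c, ecc e c <= rad e.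
Proof.
rewrite /rad; elim/big_ind: _ => //.
- exists u0; apply: ecc_le => z; have := dist_ltN u0 z; lia.
- move=> a b [c1 h1] [c2 h2]; case: (leqP a b) => h.
    by exists c1; lia.
  by exists c2; lia.
- by move=> c _; exists c.
Qed.

Lemma main_sec u :
    (forall x, x \in C1 e -> ecc e u <= dist e u x + ecc e x) /\
    (exists2 x, x \in C1 e & ecc e u = dist e u x + ecc e x).
Proof.
split; first by move=> x _; apply: ecc_tri.
have [c hc] := rad_att u.
have : forall n u, ecc e u < n -> exists2 x, x \in C1 e & ecc e u = dist e u x + ecc e x.
  elim=> [|n IH] v hv; first lia.
  case: (leqP (ecc e v) (rad e + 1)) => h.
    by exists v; rewrite ?inE ?dist_xx.
  have hcv : (ecc e c).+2 <= ecc e v by lia.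
  have [w evw hw] := NL hcv.
  have hwn : ecc e w < n by lia.
  have [x hx hwx] := IH w hwn.
  exists x => //; apply/eqP; rewrite eqn_leq ecc_tri /=.
  have := dist_tri v w x; have := dist_edge evw; lia.
by move=> /(_ (ecc e u).+1 u (ltnSn _)).
Qed.

End Walks.

Theorem proposition9 (T : finType) (e : rel T) :
  symmetric e -> irreflexive e -> 0 < #|T| ->
  connected_graph e -> chordal e ->
  forall u : T,
    (forall x, x \in C1 e -> ecc e u <= dist e u x + ecc e x) /\
    (exists2 x, x \in C1 e & ecc e u = dist e u x + ecc e x).
Proof.
move=> esym eirr _ conn ch u; exact: main_sec.
Qed.
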